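(* Let $\Phi_1,\Phi_2$ be two convex growth functions. Assume that $\Phi_2\in \mathscr{U}^q$ and that $\frac{\Phi_2}{\Phi_1}$ is nondecreasing. Then the function $\Phi_3$ defined by $\Phi_3(0)=0$ and $\Phi_3(t)=\dfrac{1}{\Phi_2\circ\Phi_1^{-1}\left(\frac 1t\right)}$ for $t>0$ belongs to the class $\mathscr{U}$.
   Context: A growth function is a continuous nondecreasing function from $[0,\infty)$ onto $[0,\infty)$; $\Phi^{-1}$ is its inverse. $\Phi$ is of upper type $q$ if there is $C>0$ with $\Phi(st)\le Ct^q\Phi(s)$ for all $s>0$, $t\ge1$. $\mathscr{U}^q$ ($q\ge1$) is the set of growth functions of upper type $q$ with $t\mapsto\Phi(t)/t$ nondecreasing, and $\mathscr{U}=\bigcup_{q\ge1}\mathscr{U}^q$. *)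

(* Defs.v *)
(* functions R -> R, only their values on [0,+oo) matter. *)
From Stdlib Require Export Reals.
Open Scope R_scope.

Definition growth_function (Phi : R -> R) : Prop :=
  (forall t, 0 <= t -> forall eps, 0 < eps -> exists delta, 0 < delta /\
      forall s, 0 <= s -> Rabs (s - t) < delta -> Rabs (Phi s - Phi t) < eps) /\
  (forall s t, 0 <= s -> s <= t -> Phi s <= Phi t) /\
  (forall t, 0 <= t -> 0 <= Phi t) /\
  (forall y, 0 <= y -> exists t, 0 <= t /\ Phi t = y).

Definition convex_on_nonneg (Phi : R -> R) : Prop :=
  forall x y l, 0 <= x -> 0 <= y -> 0 <= l <= 1 ->
    Phi (l * x + (1 - l) * y) <= l * Phi x + (1 - l) * Phi y.

Definition upper_type (q : R) (Phi : R -> R) : Prop :=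
  exists C, 0 < C /\
    forall s t, 0 < s -> 1 <= t -> Phi (s * t) <= C * Rpower t q * Phi s.

Definition quotient_t_nondecreasing (Phi : R -> R) : Prop :=
  forall s t, 0 < s -> s <= t -> Phi s / s <= Phi t / t.

Definition classU (q : R) (Phi : R -> R) : Prop :=
  1 <= q /\ growth_function Phi /\ upper_type q Phi /\ quotient_t_nondecreasing Phi.

Definition classU_all (Phi : R -> R) : Prop := exists q, classU q Phi.

(* Main.v *)
Require Import Defs.
From Stdlib Require Import Reals.
From Stdlib Require Import Lra Psatz.
Open Scope R_scope.

Lemma gf0 f : growth_function f -> f 0 = 0.
Proof.
  intros [_ [Hm [Hp Ho]]].
  destruct (Ho 0 (Rle_refl 0)) as [t [Ht Hf]].
  pose proof (Hm 0 t (Rle_refl 0) Ht). pose proof (Hp 0 (Rle_refl 0)). lra.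
Qed.

Lemma cvx_scale f : convex_on_nonneg f -> f 0 = 0 ->
  forall x y, 0 <= x -> x <= y -> 0 < y -> f x <= x / y * f y.
Proof.
  intros Hc H0 x y Hx Hxy Hy.
  assert (E : x / y * y = x) by (field; lra).
  assert (L0 : 0 <= x / y) by (unfold Rdiv; apply Rmult_le_pos; [lra| left; apply Rinv_0_lt_compat; lra]).
  assert (L1 : x / y <= 1) by nra.
  pose proof (Hc y 0 (x / y) (Rlt_le _ _ Hy) (Rle_refl 0) (conj L0 L1)) as H.
  replace (x / y * y + (1 - x / y) * 0) with x in H by (field; lra).
  rewrite H0 in H. lra.
Qed.

Lemma mono_onto_cont f :
  (forall s t, 0 <= s -> s <= t -> f s <= f t) ->
  (forall t, 0 <= t -> 0 <= f t) ->
  (forall y, 0 <= y -> exists t, 0 <= t /\ f t = y) ->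
  (forall t, 0 <= t -> forall eps, 0 < eps -> exists delta, 0 < delta /\
      forall s, 0 <= s -> Rabs (s - t) < delta -> Rabs (f s - f t) < eps).
Proof.
  intros Hm Hp Ho t Ht eps He.
  pose proof (Hp t Ht) as Hft.
  destruct (Ho (f t + eps/2)) as [b [Hb Hfb]]; [lra|].
  assert (Htb : t < b).
  { destruct (Rlt_or_le t b) as [h|h]; auto. pose proof (Hm b t Hb h). lra. }
  destruct (Rle_or_lt (f t - eps/2) 0) as [Hle|Hlt].
  - exists (b - t). split; [lra|]. intros s Hs Hst.
    apply Rabs_def2 in Hst. destruct Hst as [H1 H2].
    pose proof (Hm s b Hs ltac:(lra)). pose proof (Hp s Hs).
    apply Rabs_def1; lra.
  - destruct (Ho (f t - eps/2)) as [a [Ha Hfa]]; [lra|].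
    assert (Hat : a < t).
    { destruct (Rlt_or_le a t) as [h|h]; auto. pose proof (Hm t a Ht h). lra. }
    exists (Rmin (t - a) (b - t)). split.
    { apply Rmin_glb_lt; lra. }
    intros s Hs Hst.
    apply Rabs_def2 in Hst. destruct Hst as [H1 H2].
    pose proof (Rmin_l (t - a) (b - t)). pose proof (Rmin_r (t - a) (b - t)).
    pose proof (Hm s b Hs ltac:(lra)). pose proof (Hm a s Ha ltac:(lra)).
    apply Rabs_def1; lra.
Qed.

Lemma rpow_pos t q : 0 < t -> 0 < Rpower t q.
Proof. intros. unfold Rpower. apply exp_pos. Qed.

Lemma phi2pos q f : growth_function f -> upper_type q f -> forall u, 0 < u -> 0 < f u.
Proof.
  intros Hg [C [HC Hu]] u Hu0.
  pose proof (gf0 f Hg) as H0.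
  destruct Hg as [_ [Hm [Hp Ho]]].
  destruct (Rle_or_lt (f u) 0) as [Hle|]; auto.
  assert (Hz : f u = 0) by (pose proof (Hp u (Rlt_le _ _ Hu0)); lra).
  destruct (Ho 1 ltac:(lra)) as [t1 [Ht1 Hf1]].
  assert (Hut : u < t1).
  { destruct (Rlt_or_le u t1) as [h|h]; auto. pose proof (Hm t1 u Ht1 h). lra. }
  pose proof (Hu u (t1 / u) Hu0 ltac:(apply Rmult_le_reg_r with u; [lra|]; field_simplify; lra)) as K.
  replace (u * (t1 / u)) with t1 in K by (field; lra).
  rewrite Hz in K. rewrite Rmult_0_r in K. lra.
Qed.

Theorem lemma3p2 (q : R) (Phi1 Phi2 Phi3 : R -> R) :
  growth_function Phi1 -> convex_on_nonneg Phi1 ->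
  growth_function Phi2 -> convex_on_nonneg Phi2 ->
  classU q Phi2 ->
  (* Phi2 / Phi1 nondecreasing (where Phi1 > 0) *)
  (forall s t, 0 < s -> s <= t -> 0 < Phi1 s -> Phi2 s / Phi1 s <= Phi2 t / Phi1 t) ->
  (* Phi3(0) = 0 and Phi3(t) = 1 / Phi2(Phi1^{-1}(1/t)) for t > 0 *)
  Phi3 0 = 0 ->
  (forall t u, 0 < t -> 0 <= u -> Phi1 u = / t -> Phi3 t = / Phi2 u) ->
  classU_all Phi3.
Proof.
  intros G1 C1 G2 C2 [Hq [_ [UT QT]]] Hrat H30 H3.
  pose proof (gf0 _ G1) as P10. pose proof (gf0 _ G2) as P20.
  pose proof (phi2pos _ _ G2 UT) as P2pos.
  pose proof G1 as [_ [M1 [Pos1 On1]]].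
  pose proof G2 as [_ [M2 [Pos2 On2]]].
  assert (Hw : forall t, 0 < t -> exists u, 0 < u /\ Phi1 u = / t /\ Phi3 t = / Phi2 u /\ 0 < Phi2 u).
  { intros t Ht. destruct (On1 (/ t)) as [u [Hu Hfu]].
    { left; apply Rinv_0_lt_compat; lra. }
    assert (0 < u).
    { destruct Hu as [h|h]; auto. subst u. rewrite P10 in Hfu.
      pose proof (Rinv_0_lt_compat t Ht). lra. }
    exists u. repeat split; auto. }
  assert (P1pos : forall u, 0 < u -> 0 < Phi1 u).
  { intros u Hu. destruct (Rle_or_lt (Phi1 u) 0) as [Hle|]; auto.
    assert (Hz : Phi1 u = 0) by (pose proof (Pos1 u (Rlt_le _ _ Hu)); lra).
    destruct (On1 1 ltac:(lra)) as [t1 [Ht1 Hf1]].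
    assert (Hut : u < t1).
    { destruct (Rlt_or_le u t1) as [h|h]; auto. pose proof (M1 t1 u Ht1 h). lra. }
    pose proof (P2pos u Hu) as m0. pose proof (P2pos t1 ltac:(lra)) as m1.
    set (c := Rmin (Phi2 u / (2 * Phi2 t1)) (1/2)).
    assert (Hc0 : 0 < c).
    { apply Rmin_glb_lt; [|lra]. unfold Rdiv. apply Rmult_lt_0_compat; auto.
      apply Rinv_0_lt_compat; lra. }
    assert (Hc1 : c <= Phi2 u / (2 * Phi2 t1)) by apply Rmin_l.
    assert (Hc2 : c <= 1/2) by apply Rmin_r.
    destruct (On1 c ltac:(lra)) as [s [Hs Hfs]].
    assert (Hus : u <= s).
    { destruct (Rlt_or_le s u) as [h|h]; auto. pose proof (M1 s u Hs (Rlt_le _ _ h)). lra. }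
    assert (Hst : s <= t1).
    { destruct (Rlt_or_le t1 s) as [h|h]; auto. pose proof (M1 t1 s Ht1 (Rlt_le _ _ h)). lra. }
    pose proof (Hrat s t1 ltac:(lra) Hst ltac:(lra)) as K.
    rewrite Hfs, Hf1 in K.
    pose proof (M2 u s (Rlt_le _ _ Hu) Hus) as K2.
    assert (Phi2 s <= c * Phi2 t1).
    { unfold Rdiv in K. rewrite Rinv_1, Rmult_1_r in K.
      replace (Phi2 s) with (Phi2 s * / c * c) by (field; lra). nra. }
    assert (Phi2 u / (2 * Phi2 t1) * (2 * Phi2 t1) = Phi2 u) by (field; lra).
    assert (c * (2 * Phi2 t1) <= Phi2 u) by nra.
    lra. }
  assert (M3 : forall s t, 0 <= s -> s <= t -> Phi3 s <= Phi3 t).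
  { intros s t Hs Hst.
    destruct Hs as [Hs|Hs].
    - destruct Hst as [Hst|Hst]; [|subst; lra].
      destruct (Hw s Hs) as [us [Hus [E1s [E3s Ps]]]].
      destruct (Hw t ltac:(lra)) as [ut [Hut [E1t [E3t Pt]]]].
      assert (ut <= us).
      { destruct (Rlt_or_le us ut) as [h|h]; auto.
        pose proof (M1 us ut ltac:(lra) (Rlt_le _ _ h)).
        assert (/ t < / s) by (apply Rinv_lt_contravar; nra). lra. }
      rewrite E3s, E3t. apply Rinv_le_contravar; auto. apply M2; lra.
    - subst s. rewrite H30. destruct Hst as [Hst|Hst]; [|subst; lra].
      destruct (Hw t Hst) as [ut [Hut [E1t [E3t Pt]]]]. rewrite E3t.
      left; apply Rinv_0_lt_compat; lra. }
  assert (Pos3 : forall t, 0 <= t -> 0 <= Phi3 t).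
  { intros t Ht. rewrite <- H30. apply M3; lra. }
  assert (On3 : forall y, 0 <= y -> exists t, 0 <= t /\ Phi3 t = y).
  { intros y [Hy|Hy].
    - destruct (On2 (/ y)) as [u [Hu Hfu]]. left; apply Rinv_0_lt_compat; lra.
      assert (Hu0 : 0 < u).
      { destruct Hu as [h|h]; auto. subst u. rewrite P20 in Hfu.
        pose proof (Rinv_0_lt_compat y Hy). lra. }
      pose proof (P1pos u Hu0).
      exists (/ Phi1 u). split. left; apply Rinv_0_lt_compat; lra.
      rewrite (H3 (/ Phi1 u) u); auto.
      + rewrite Hfu. apply Rinv_inv.
      + apply Rinv_0_lt_compat; lra.
      + rewrite Rinv_inv; auto.
    - exists 0. split; [lra|]. subst; auto. }
  exists q. split; [exact Hq|]. split; [|split].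
  - split; [apply mono_onto_cont; auto|]. split; auto.
  - destruct UT as [C [HC HU]]. exists C. split; auto.
    intros s tau Hs Htau.
    destruct (Hw s Hs) as [us [Hus [E1s [E3s Ps]]]].
    destruct (Hw (s * tau) ltac:(nra)) as [v [Hv [E1v [E3v Pv]]]].
    assert (Hle : us <= v * tau).
    { destruct (Rle_or_lt us (v * tau)) as [h|h]; auto. exfalso.
      pose proof (cvx_scale _ C1 P10 v us ltac:(lra) ltac:(nra) Hus) as K.
      set (l := v / us) in K.
      assert (El : l * us = v) by (unfold l; field; lra).
      assert (Hl : l * tau < 1) by nra.
      assert (Hp : 0 < / s) by (apply Rinv_0_lt_compat; lra).
      assert (E : Phi1 v * tau = / s) by (rewrite E1v; field; lra).
      rewrite E1s in K. nra. }
    pose proof (HU v tau Hv Htau) as K.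
    pose proof (M2 us (v * tau) ltac:(lra) Hle) as K2.
    pose proof (rpow_pos tau q ltac:(lra)) as Rp.
    rewrite E3s, E3v.
    set (X := Phi2 us) in *. set (Y := Phi2 v) in *. set (Kc := C * Rpower tau q).
    assert (0 < Kc) by (unfold Kc; nra).
    replace (/ Y) with (X * / (X * Y)) by (field; lra).
    replace (Kc * / X) with (Kc * Y * / (X * Y)) by (field; lra).
    apply Rmult_le_compat_r. left; apply Rinv_0_lt_compat; nra.
    unfold Kc. lra.
  - intros s t Hs Hst.
    destruct Hst as [Hst|Hst]; [|subst; lra].
    destruct (Hw s Hs) as [us [Hus [E1s [E3s Ps]]]].
    destruct (Hw t ltac:(lra)) as [ut [Hut [E1t [E3t Pt]]]].
    assert (Hle : ut <= us).
    { destruct (Rlt_or_le us ut) as [h|h]; auto.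
      pose proof (M1 us ut ltac:(lra) (Rlt_le _ _ h)).
      assert (/ t < / s) by (apply Rinv_lt_contravar; nra). lra. }
    pose proof (Hrat ut us Hut Hle ltac:(rewrite E1t; apply Rinv_0_lt_compat; lra)) as K.
    rewrite E1t in K. rewrite E1s in K. unfold Rdiv in K. rewrite !Rinv_inv in K.
    rewrite E3s, E3t.
    set (A := Phi2 ut) in *. set (Cc := Phi2 us) in *.
    replace (/ Cc / s) with (A * t * / (A * Cc * s * t)) by (field; lra).
    replace (/ A / t) with (Cc * s * / (A * Cc * s * t)) by (field; lra).
    apply Rmult_le_compat_r; [|lra].
    left; apply Rinv_0_lt_compat.
    assert (0 < A * Cc) by nra. assert (0 < s * t) by nra. nra.
Qed.
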